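(* Every graph $G$ with circular chromatic number $\chi_c(G)\le 5/2$ belongs to CBU.
   Context: Let $e_1,\ldots,e_d$ be the standard basis of $\mathbb{R}^d$. For $d\ge 1$, a graph belongs to $d$-CBU if one can assign to each vertex an axis-parallel box (product of $d$ closed intervals of positive length) in $\mathbb{R}^d$ such that the boxes have pairwise disjoint interiors, two distinct vertices are adjacent iff their boxes intersect, and any two intersecting boxes intersect in a $(d-1)$-dimensional box orthogonal to $e_1$. CBU is the union of $d$-CBU over all $d\ge 1$. *)

(* Defs.v *)
From mathcomp Require Import all_boot.
From Stdlib Require Import Reals.

Set Implicit Arguments.
Unset Strict Implicit.
Unset Printing Implicit Defensive.

Definition simple_graph (V : finType) (adj : rel V) : Prop :=
  (forall u v, adj u v = adj v u) /\ (forall v, adj v v = false).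

(* (k,d)-coloring: c : V -> {0,...,k-1} with d <= |c u - c v| <= k - d on edges.
   |a - b| on nat is written (a - b) + (b - a) (truncated subtraction). *)
Definition kd_coloring (V : finType) (adj : rel V) (k d : nat) (c : V -> 'I_k) : Prop :=
  forall u v, adj u v ->
    (d <= (c u - c v) + (c v - c u) <= k - d)%N.

Definition kd_colorable (V : finType) (adj : rel V) (k d : nat) : Prop :=
  (0 < d)%N /\ (2 * d <= k)%N /\ exists c : V -> 'I_k, @kd_coloring V adj k d c.

(* chi_c(G) = inf { k/d | G has a (k,d)-coloring, k >= 2d, d >= 1 }.
   "chi_c(G) <= r" unfolds the infimum: for every eps > 0 some element of the
   set is < r + eps. *)
Definition circ_chrom_le (V : finType) (adj : rel V) (r : R) : Prop :=
  forall eps : R, (0 < eps)%R ->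
    exists k d : nat, kd_colorable adj k d /\ (INR k / INR d < r + eps)%R.

Definition in_box (d : nat) (lo hi : 'I_d -> R) (x : 'I_d -> R) : Prop :=
  forall i, (lo i <= x i <= hi i)%R.

Definition in_int_box (d : nat) (lo hi : 'I_d -> R) (x : 'I_d -> R) : Prop :=
  forall i, (lo i < x i < hi i)%R.

(* coordinate e_1 is index 0 *)
Definition flat_box_e1 (d : nat) (S : ('I_d -> R) -> Prop) : Prop :=
  exists (c : R) (a b : 'I_d -> R),
    (forall i : 'I_d, nat_of_ord i <> 0%N -> (a i < b i)%R) /\
    (forall x : 'I_d -> R,
       S x <-> (forall i : 'I_d,
                  (nat_of_ord i = 0%N -> x i = c) /\
                  (nat_of_ord i <> 0%N -> (a i <= x i <= b i)%R))).

Definition in_dCBU (V : finType) (adj : rel V) (d : nat) : Prop :=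
  (1 <= d)%N /\
  exists lo hi : V -> 'I_d -> R,
    (forall v i, (lo v i < hi v i)%R) /\
    (forall u v, u <> v ->
       ~ (exists x, in_int_box (lo u) (hi u) x /\ in_int_box (lo v) (hi v) x)) /\
    (forall u v, u <> v ->
       (adj u v <-> exists x, in_box (lo u) (hi u) x /\ in_box (lo v) (hi v) x)) /\
    (forall u v, u <> v ->
       (exists x, in_box (lo u) (hi u) x /\ in_box (lo v) (hi v) x) ->
       flat_box_e1 (fun x => in_box (lo u) (hi u) x /\ in_box (lo v) (hi v) x)).

Definition in_CBU (V : finType) (adj : rel V) : Prop :=
  exists d : nat, in_dCBU adj d.

(* Main.v *)
Require Import Defs.
From Stdlib Require Import ZArith Lia.
From mathcomp Require Import all_boot zify.
From Stdlib Require Import Reals Lra.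
Set Implicit Arguments.
Unset Strict Implicit.

Definition upZ {V : finType} (cz : V -> Z) (u v : V) : Z :=
  if Z.ltb (cz u) (cz v) then 1%Z else 0%Z.
Fixpoint upc {V : finType} (cz : V -> Z) (u : V) (p : seq V) : Z :=
  match p with nil => 0%Z | v :: p' => (upZ cz u v + upc cz v p')%Z end.
Definition wt {V : finType} (cz : V -> Z) u p : Z :=
  (5 * upc cz u p - 2 * Z.of_nat (size p))%Z.
Definition wZ {V : finType} (cz : V -> Z) (u v : V) : Z := (5 * upZ cz u v - 2)%Z.

Lemma upc_cat {V : finType} (cz : V -> Z) u p1 p2 :
  upc cz u (p1 ++ p2) = (upc cz u p1 + upc cz (last u p1) p2)%Z.
Proof. elim: p1 u => [|v p IH] u /=; first lia. rewrite IH; lia. Qed.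

Lemma wt_cat {V : finType} (cz : V -> Z) u p1 p2 :
  wt cz u (p1 ++ p2) = (wt cz u p1 + wt cz (last u p1) p2)%Z.
Proof. rewrite /wt upc_cat size_cat; lia. Qed.

Lemma wt_cons {V : finType} (cz : V -> Z) u v p :
  wt cz u (v :: p) = (wZ cz u v + wt cz v p)%Z.
Proof.
have E : upc cz u (v :: p) = (upZ cz u v + upc cz v p)%Z by [].
have Es : size (v :: p) = (size p).+1 by [].
rewrite /wt /wZ E Es; lia. Qed.

Lemma wt_rcons {V : finType} (cz : V -> Z) u p v :
  wt cz u (rcons p v) = (wt cz u p + wZ cz (last u p) v)%Z.
Proof. rewrite -cats1 wt_cat wt_cons.
have -> : wt cz v [::] = 0%Z by rewrite /wt. lia. Qed.

Lemma upc_bounds {V : finType} (cz : V -> Z) u p :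
  (0 <= upc cz u p <= Z.of_nat (size p))%Z.
Proof. elim: p u => [|v p IH] u /=; first lia. move: (IH v); rewrite /upZ.
case: Z.ltb; lia. Qed.

Lemma tele {V : finType} (adj : rel V) (cz : V -> Z) (k d : Z) :
  (forall u v, adj u v -> (d <= cz v - cz u <= k - d)%Z \/ (d <= cz u - cz v <= k - d)%Z) ->
  (0 < d)%Z ->
  forall p u, path adj u p ->
  (cz (last u p) - cz u <= k * upc cz u p - d * Z.of_nat (size p))%Z.
Proof.
move=> Hc Hd; elim=> [|v p IH] u /=; first lia.
move=> /andP [Huv Hp]; move: (IH v Hp) (Hc _ _ Huv); rewrite /upZ.
case: (Z.ltb_spec (cz u) (cz v)); nia.
Qed.

Lemma closed_nonneg {V : finType} (adj : rel V) (cz : V -> Z) (k d N : Z) :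
  (forall u v, adj u v -> (d <= cz v - cz u <= k - d)%Z \/ (d <= cz u - cz v <= k - d)%Z) ->
  (0 < d)%Z -> (2 * k * N < 5 * d * N + d)%Z ->
  forall x q, path adj x q -> last x q = x -> (Z.of_nat (size q) <= N)%Z ->
  (0 <= wt cz x q)%Z.
Proof.
move=> Hc Hd HkN x q Hp Hl HN.
have := tele Hc Hd Hp; rewrite Hl.
have := upc_bounds cz x q.
rewrite /wt.
set a := upc cz x q; set L := Z.of_nat (size q) => Ha Ht.
destruct (Z_le_gt_dec (2 * L) (5 * a)) as [h|h]; first lia.
exfalso.
have L0 : (0 <= L)%Z by rewrite /L; lia.
have h1 : (0 <= (2 * L - 5 * a - 1) * (d * N))%Z by apply Z.mul_nonneg_nonneg; nia.
have h2 : (0 <= (k * a - d * L) * (2 * N))%Z by apply Z.mul_nonneg_nonneg; lia.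
have h3 : (0 <= (5 * d * N + d - 1 - 2 * k * N) * a)%Z by apply Z.mul_nonneg_nonneg; lia.
nia.
Qed.

Definition stepf {V : finType} (adj : rel V) (w : V -> V -> Z) (Dt : V -> Z) (v : V) : Z :=
  foldr (fun u m => if adj u v then Z.min (Dt u + w u v) m else m)%Z (Dt v) (enum V).

Fixpoint BF {V : finType} (adj : rel V) (w : V -> V -> Z) (t : nat) : V -> Z :=
  match t with O => fun _ => 0%Z | S t' => stepf adj w (BF adj w t') end.

Lemma foldr_min_props {V : finType} (adj : rel V) (f : V -> Z) v (acc : Z) (l : seq V) :
  let r := foldr (fun u m => if adj u v then Z.min (f u) m else m)%Z acc l in
  (r <= acc)%Z /\ (forall u, u \in l -> adj u v -> (r <= f u)%Z) /\
  (r = acc \/ exists u, adj u v /\ r = f u).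
Proof.
elim: l => [|x l [IH1 [IH2 IH3]]] /=.
  split; first lia. split; [by [] | by left].
case: ifP => Hx.
- split; first lia. split.
  + move=> u; rewrite in_cons => /orP [/eqP -> _|Hu Hadj]; first lia.
    move: (IH2 u Hu Hadj); lia.
  + case: (Z.min_spec (f x) (foldr (fun u m => if adj u v then Z.min (f u) m else m)%Z acc l)) => [[_ ->]|[_ ->]].
    * by right; exists x.
    * exact: IH3.
- split; first lia. split; last exact: IH3.
  move=> u; rewrite in_cons => /orP [/eqP ->|Hu Hadj]; first by rewrite Hx.
  exact: IH2.
Qed.

Lemma step_le_acc {V : finType} (adj : rel V) w Dt v : (stepf adj w Dt v <= Dt v)%Z.
Proof. by case: (foldr_min_props adj (fun u => Dt u + w u v)%Z v (Dt v) (enum V)). Qed.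

Lemma step_le_arc {V : finType} (adj : rel V) w Dt u v : adj u v ->
  (stepf adj w Dt v <= Dt u + w u v)%Z.
Proof.
move=> H; case: (foldr_min_props adj (fun u => Dt u + w u v)%Z v (Dt v) (enum V)) => _ [H2 _].
apply: H2 => //; by rewrite mem_enum.
Qed.

Lemma step_cases {V : finType} (adj : rel V) w Dt v :
  stepf adj w Dt v = Dt v \/ exists u, adj u v /\ stepf adj w Dt v = (Dt u + w u v)%Z.
Proof. by case: (foldr_min_props adj (fun u => Dt u + w u v)%Z v (Dt v) (enum V)) => _ [_ H3]. Qed.

Lemma BF_le {V : finType} (adj : rel V) (cz : V -> Z) :
  forall t u p, path adj u p -> leq (size p) t ->
  (BF adj (wZ cz) t (last u p) <= wt cz u p)%Z.
Proof.
elim=> [|t IH] u p.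
  by case: p => //= _ _; rewrite /wt /=; lia.
case/lastP: p => [|p v].
  move=> _ _ /=. have := IH u [::] isT isT. have := @step_le_acc V adj (wZ cz) (BF adj (wZ cz) t) u.
  simpl; lia.
rewrite rcons_path last_rcons size_rcons => /andP [Hp Ha] Hs.
have := IH u p Hp Hs.
have := @step_le_arc V adj (wZ cz) (BF adj (wZ cz) t) _ _ Ha.
rewrite wt_rcons /=. lia.
Qed.

Lemma BF_walk {V : finType} (adj : rel V) (cz : V -> Z) :
  forall t v, exists u p, [/\ path adj u p, last u p = v, leq (size p) t &
     wt cz u p = BF adj (wZ cz) t v].
Proof.
elim=> [|t IH] v.
  by exists v, [::]; split => //; rewrite /wt /=.
case: (@step_cases V adj (wZ cz) (BF adj (wZ cz) t) v) => [E|[u [Ha E]]].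
  have [u [p [H1 H2 H3 H4]]] := IH v.
  exists u, p; split => //; first by apply: leq_trans H3 _.
  by rewrite /= E.
have [u0 [p [H1 H2 H3 H4]]] := IH u.
exists u0, (rcons p v); split.
- by rewrite rcons_path H1 H2 Ha.
- by rewrite last_rcons.
- by rewrite size_rcons.
- by rewrite /= E wt_rcons H2 H4.
Qed.

Lemma in_split_ex {T : eqType} (x : T) (q : seq T) :
  x \in q -> exists p1 p2, q = p1 ++ x :: p2.
Proof.
elim: q => [|y q IH] //; rewrite in_cons => /orP [/eqP ->|H].
  by exists [::], q.
have [p1 [p2 ->]] := IH H. by exists (y :: p1), p2.
Qed.

Lemma shorten {V : finType} (adj : rel V) (cz : V -> Z) (N : nat) :
  (forall x q, path adj x q -> last x q = x -> leq (size q) N -> (0 <= wt cz x q)%Z) ->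
  forall p u, path adj u p -> leq (size p) N -> ~~ uniq (u :: p) ->
  exists p', [/\ path adj u p', last u p' = last u p, leq (size p').+1 (size p) &
     (wt cz u p' <= wt cz u p)%Z].
Proof.
move=> Hcl; elim=> [|v p IH] u //=.
move=> /andP [Huv Hp] Hs; rewrite negb_and negbK => /orP [Hin|Hnu].
- have [p1 [p2 E]] := in_split_ex Hin.
  have Hpath : path adj u (v :: p) by rewrite /= Huv Hp.
  rewrite E -cat_rcons in Hpath.
  rewrite cat_path last_rcons in Hpath. case/andP: Hpath => Hp1 Hp2.
  exists p2; split => //.
  + have -> : last v p = last u (v :: p) by [].
    by rewrite E -cat_rcons last_cat last_rcons.
  + have : size (v :: p) = size (p1 ++ u :: p2) by rewrite E.
    rewrite size_cat /= => ->. by rewrite addnS ltnS leq_addl.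
  + have -> : wt cz u (v :: p) = wt cz u (rcons p1 u ++ p2) by rewrite cat_rcons -E.
    rewrite wt_cat last_rcons.
    have : (0 <= wt cz u (rcons p1 u))%Z.
      apply: Hcl => //; first by rewrite last_rcons.
      have : size (v :: p) = size (p1 ++ u :: p2) by rewrite E.
      rewrite size_rcons size_cat /= => Es.
      apply: leq_trans Hs; rewrite -ltnS Es. by rewrite ltnS addnS ltnS leq_addr.
    lia.
- have [p'' [H1 H2 H3 H4]] := IH v Hp (ltnW Hs) Hnu.
  exists (v :: p''); split => //=.
  + by rewrite Huv H1.
  + rewrite wt_cons wt_cons; lia.
Qed.

Lemma potential {V : finType} (adj : rel V) (cz : V -> Z) (k d : Z) :
  (forall u v, adj u v = adj v u) ->
  (forall u v, adj u v -> (d <= cz v - cz u <= k - d)%Z \/ (d <= cz u - cz v <= k - d)%Z) ->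
  (0 < d)%Z -> (2 * k * Z.of_nat (#|V|.+1) < 5 * d * Z.of_nat (#|V|.+1) + d)%Z ->
  exists x : V -> Z, forall u v, adj u v ->
    (2 <= x v - x u <= 3)%Z \/ (2 <= x u - x v <= 3)%Z.
Proof.
move=> Hsym Hc Hd HkN.
set n := #|V|.
have Hcl : forall x q, path adj x q -> last x q = x -> leq (size q) n.+1 -> (0 <= wt cz x q)%Z.
  move=> x q Hp Hl Hs. apply: (closed_nonneg Hc Hd HkN Hp Hl). lia.
have key : forall u v, adj u v -> (BF adj (wZ cz) n v <= BF adj (wZ cz) n u + wZ cz u v)%Z.
  move=> u v Ha.
  have h1 := @step_le_arc V adj (wZ cz) (BF adj (wZ cz) n) _ _ Ha.
  have [u0 [p [H1 H2 H3 H4]]] := BF_walk adj cz n.+1 v.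
  suff : (BF adj (wZ cz) n v <= wt cz u0 p)%Z by rewrite H4 /=; lia.
  case: (leqP (size p) n) => Hs.
    by rewrite -H2; apply: BF_le.
  have Hnu : ~~ uniq (u0 :: p).
    apply/negP => Hu.
    have := card_uniqP Hu. have := max_card (mem (u0 :: p)).
    rewrite /= => h e. rewrite -/n in h. move: h; rewrite e /=. lia.
  have [p' [G1 G2 G3 G4]] := shorten Hcl H1 H3 Hnu.
  have : leq (size p') n by rewrite -ltnS; apply: leq_trans G3 H3.
  move=> h. have := @BF_le V adj cz n u0 p' G1 h. rewrite G2 H2. lia.
exists (BF adj (wZ cz) n) => u v Ha.
have Hb : adj v u.
  by rewrite Hsym.
have k1 := key u v Ha. have k2 := key v u Hb.
move: k1 k2 (Hc u v Ha); rewrite /wZ /upZ.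
case: (Z.ltb_spec (cz u) (cz v)); case: (Z.ltb_spec (cz v) (cz u)); lia.
Qed.

Open Scope R_scope.

Definition tlo (m : Z) : R :=
  if Z.eqb m 0 then 0 else if Z.eqb m 1 then 3 else if Z.eqb m 2 then 1
  else if Z.eqb m 3 then 1 else 2.
Definition thi (m : Z) : R :=
  if Z.eqb m 0 then 1 else if Z.eqb m 1 then 5 else if Z.eqb m 2 then 2
  else if Z.eqb m 3 then 3 else 3.

Lemma tab_lt m : tlo m < thi m.
Proof. rewrite /tlo /thi; destruct (Z.eqb m 0), (Z.eqb m 1), (Z.eqb m 2), (Z.eqb m 3); lra. Qed.

Lemma tab_meet (a b : Z) : (2 <= b - a <= 3)%Z ->
  thi (a mod 5) = tlo (b mod 5) \/ thi (b mod 5) = tlo (a mod 5).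
Proof.
move=> H.
have : ((a mod 5 = 0 /\ (b mod 5 = 2 \/ b mod 5 = 3)) \/
        (a mod 5 = 1 /\ (b mod 5 = 3 \/ b mod 5 = 4)) \/
        (a mod 5 = 2 /\ (b mod 5 = 4 \/ b mod 5 = 0)) \/
        (a mod 5 = 3 /\ (b mod 5 = 0 \/ b mod 5 = 1)) \/
        (a mod 5 = 4 /\ (b mod 5 = 1 \/ b mod 5 = 2)))%Z.
  pose proof (Z.div_mod a 5 ltac:(lia)).
  pose proof (Z.div_mod b 5 ltac:(lia)).
  pose proof (Z.mod_pos_bound a 5 ltac:(lia)).
  pose proof (Z.mod_pos_bound b 5 ltac:(lia)).
  remember (a mod 5)%Z as ra eqn:Era. remember (b mod 5)%Z as rb eqn:Erb.
  remember (a / 5)%Z as qa eqn:Eqa. remember (b / 5)%Z as qb eqn:Eqb.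
  clear Era Erb Eqa Eqb.
  assert (Hc : (ra = 0 \/ ra = 1 \/ ra = 2 \/ ra = 3 \/ ra = 4)%Z) by lia.
  assert (Hd : (rb = 0 \/ rb = 1 \/ rb = 2 \/ rb = 3 \/ rb = 4)%Z) by lia.
  destruct Hc as [E|[E|[E|[E|E]]]]; destruct Hd as [F|[F|[F|[F|F]]]]; subst; lia.
move=> [[-> [->| ->]]|[[-> [->| ->]]|[[-> [->| ->]]|[[-> [->| ->]]|[-> [->| ->]]]]]];
  rewrite /tlo /thi /=; lra.
Qed.

Lemma meetZ (a b : Z) : (2 <= b - a <= 3)%Z \/ (2 <= a - b <= 3)%Z ->
  thi (a mod 5) = tlo (b mod 5) \/ thi (b mod 5) = tlo (a mod 5).
Proof. case=> H; [exact: (@tab_meet a b H) | case: (@tab_meet b a H); tauto]. Qed.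

Ltac rm := unfold Rmax, Rmin in *; repeat destruct Rle_dec; simpl nat_of_ord in *; lra.


Definition own {V : finType} (v : V) (i : nat) : bool := ((enum_rank v).+1 == i).
Definition sepb {V : finType} (adj : rel V) (v : V) (i : nat) : bool :=
  [exists w, [&& ((enum_rank w).+1 == i), ~~ adj v w & w != v]].
Definition blo {V : finType} (adj : rel V) (x : V -> Z) (v : V) (i : nat) : R :=
  if (i == O) then tlo (x v mod 5)%Z else if own v i then 0 else if sepb adj v i then 2 else 0.
Definition bhi {V : finType} (adj : rel V) (x : V -> Z) (v : V) (i : nat) : R :=
  if (i == O) then thi (x v mod 5)%Z else if own v i then 1 else 3.

Lemma blo_lt {V : finType} (adj : rel V) x v i : blo adj x v i < bhi adj x v i.
Proof.
rewrite /blo /bhi; case: (i == O); first exact: tab_lt.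
case: (own v i); first lra. case: (sepb adj v i); lra.
Qed.

Lemma own_sep_false {V : finType} (adj : rel V) u v i :
  (forall u v, adj u v = adj v u) -> adj u v -> own u i -> sepb adj v i -> False.
Proof.
move=> Hs Ha Ho /existsP [w /and3P [Hw Hnadj Hwv]].
move: Ho; rewrite /own => /eqP Ho. move/eqP: Hw; rewrite -Ho => /eqP.
rewrite eqSS => /eqP /ord_inj /enum_rank_inj E. subst w.
by move: Hnadj; rewrite Hs Ha.
Qed.

Lemma overlap {V : finType} (adj : rel V) x u v i :
  (forall u v, adj u v = adj v u) -> adj u v -> (i != O) ->
  Rmax (blo adj x u i) (blo adj x v i) < Rmin (bhi adj x u i) (bhi adj x v i).
Proof.
move=> Hs Ha Hi. have Ha' : adj v u by rewrite Hs.
rewrite /blo /bhi (negbTE Hi).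
case Eou: (own u i); case Eov: (own v i); case Esu: (sepb adj u i); case Esv: (sepb adj v i);
  try rm; exfalso;
  first [ exact: (@own_sep_false _ adj u v i Hs Ha Eou Esv) | exact: (@own_sep_false _ adj v u i Hs Ha' Eov Esu) ].
Qed.

Lemma meet0 {V : finType} (adj : rel V) (x : V -> Z) u v :
  (forall u v, adj u v -> (2 <= x v - x u <= 3)%Z \/ (2 <= x u - x v <= 3)%Z) ->
  adj u v -> bhi adj x u O = blo adj x v O \/ bhi adj x v O = blo adj x u O.
Proof. move=> Hx Ha; rewrite /blo /bhi /=; apply: meetZ; case: (Hx u v Ha); lia. Qed.

Lemma sep_coord {V : finType} (adj : rel V) (x : V -> Z) u v :
  (forall u v, adj u v = adj v u) -> ~~ adj u v -> u <> v ->
  let i := (enum_rank u).+1 in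
  [/\ blo adj x u i = 0, bhi adj x u i = 1, blo adj x v i = 2 & bhi adj x v i = 3].
Proof.
move=> Hs Hna Huv i.
have Hou : own u i by rewrite /own.
have Hov : own v i = false.
  apply/negP; rewrite /own /i eqSS => /eqP /ord_inj /enum_rank_inj E; exact: Huv.
have Hsv : sepb adj v i.
  apply/existsP; exists u; rewrite /i eqxx /= Hs Hna /=. by apply/eqP.
by rewrite /blo /bhi /i /= Hou Hov Hsv -/i.
Qed.

Lemma geometry {V : finType} (adj : rel V) (x : V -> Z) :
  simple_graph adj ->
  (forall u v, adj u v -> (2 <= x v - x u <= 3)%Z \/ (2 <= x u - x v <= 3)%Z) ->
  in_CBU adj.
Proof.
move=> [Hs Hirr] Hx.
exists (#|V|.+1); split; first by [].
pose lo := fun (v : V) (i : 'I_(#|V|.+1)) => blo adj x v i.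
pose hi := fun (v : V) (i : 'I_(#|V|.+1)) => bhi adj x v i.
have sepI : forall u v, ~~ adj u v -> u <> v -> exists i : 'I_(#|V|.+1),
    [/\ lo u i = 0, hi u i = 1, lo v i = 2 & hi v i = 3].
  move=> u v Hna Huv.
  have Hlt : leq (enum_rank u).+2 #|V|.+1 by rewrite ltnS ltn_ord.
  exists (Ordinal Hlt). exact: (@sep_coord V adj x u v Hs Hna Huv).
have common_adj : forall u v, u <> v ->
    (exists p, in_box (lo u) (hi u) p /\ in_box (lo v) (hi v) p) -> adj u v.
  move=> u v Huv [p [Hu Hv]]. case: (boolP (adj u v)) => // Hna.
  have [i [E1 E2 E3 E4]] := sepI u v Hna Huv.
  move: (Hu i) (Hv i); rewrite E1 E2 E3 E4; lra.
exists lo, hi; split; [|split; [|split]].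
- move=> v i; exact: blo_lt.
- move=> u v Huv [p [Hu Hv]].
  case: (boolP (adj u v)) => Ha.
  + move: (Hu ord0) (Hv ord0). rewrite /lo /hi.
    have := blo_lt adj x u O. have := blo_lt adj x v O.
    case: (@meet0 V adj x u v Hx Ha) => /= ->; lra.
  + have [i [E1 E2 E3 E4]] := sepI u v Ha Huv.
    move: (Hu i) (Hv i); rewrite E1 E2 E3 E4; lra.
- move=> u v Huv; split; last exact: common_adj.
  move=> Ha.
  have H0 := @meet0 V adj x u v Hx Ha.
  have L1 := blo_lt adj x u. have L2 := blo_lt adj x v.
  exists (fun i => (Rmax (lo u i) (lo v i) + Rmin (hi u i) (hi v i)) / 2).
  have M : forall i : 'I_(#|V|.+1), Rmax (lo u i) (lo v i) <= Rmin (hi u i) (hi v i).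
    move=> i. rewrite /lo /hi. case: (eqVneq (nat_of_ord i) O) => Ei.
    + rewrite Ei. move: (L1 O) (L2 O). case: H0 => ->; rm.
    + apply: Rlt_le; exact: overlap.
  split => i; move: (M i); rm.
- move=> u v Huv Hc.
  have Ha := common_adj u v Huv Hc.
  have H0 := @meet0 V adj x u v Hx Ha.
  have L1 := blo_lt adj x u O. have L2 := blo_lt adj x v O.
  exists (Rmax (lo u ord0) (lo v ord0)),
    (fun i => Rmax (lo u i) (lo v i)), (fun i => Rmin (hi u i) (hi v i)).
  split.
  + move=> i Hi. apply: overlap => //. by apply/eqP.
  + move=> p; split.
    * move=> [Hu Hv] i; split.
      - move=> Ei. have -> : i = ord0 by apply: ord_inj.
        move: (Hu ord0) (Hv ord0). rewrite /lo /hi /=. case: H0 => E; rewrite E in L1 L2 *; rm.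
      - move=> _; move: (Hu i) (Hv i); rm.
    * move=> H; rewrite /lo /hi in H; split => i.
      - case: (eqVneq (nat_of_ord i) O) => Ei.
        + have Ei' : i = ord0 by apply: ord_inj.
          have := (proj1 (H i) Ei). rewrite Ei' /lo /hi /=.
          case: H0 => E; rewrite E in L1 L2 *; rm.
        + have := (proj2 (H i) (elimN eqP Ei)). rewrite /lo /hi. rm.
      - case: (eqVneq (nat_of_ord i) O) => Ei.
        + have Ei' : i = ord0 by apply: ord_inj.
          have := (proj1 (H i) Ei). rewrite Ei' /lo /hi /=.
          case: H0 => E; rewrite E in L1 L2 *; rm.
        + have := (proj2 (H i) (elimN eqP Ei)). rewrite /lo /hi. rm.
Qed.

Theorem mainTheorem15 (V : finType) (adj : rel V) :
  simple_graph adj ->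
  circ_chrom_le adj (5 / 2)%R ->
  in_CBU adj.
Proof.
move=> Hsg Hcc. have [Hsym Hirr] := Hsg.
set N := #|V|.+1.
have HN : (0 < INR N)%R by apply: lt_0_INR; rewrite /N; lia.
have Heps : (0 < / (2 * INR N))%R by apply: Rinv_0_lt_compat; lra.
have [k [d [[Hd [H2d [c Hc]]] Hlt]]] := Hcc _ Heps.
have HD : (0 < INR d)%R by apply: lt_0_INR; lia.
have HR : (2 * INR k * INR N < 5 * INR d * INR N + INR d)%R.
  have e : INR k = (INR k / INR d * INR d)%R by field; lra.
  rewrite e. set K := (INR k / INR d)%R.
  have h : (K * (2 * INR d * INR N) < (5 / 2 + / (2 * INR N)) * (2 * INR d * INR N))%R.
    apply: Rmult_lt_compat_r => //. apply: Rmult_lt_0_compat; lra.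
  have e2 : ((5 / 2 + / (2 * INR N)) * (2 * INR d * INR N) = 5 * INR d * INR N + INR d)%R.
    by field; lra.
  rewrite e2 in h. lra.
rewrite !INR_IZR_INZ in HR.
rewrite -!mult_IZR -plus_IZR in HR. apply lt_IZR in HR.
pose cz := fun v => Z.of_nat (c v).
have Hcz : forall u v, adj u v ->
    (Z.of_nat d <= cz v - cz u <= Z.of_nat k - Z.of_nat d)%Z \/
    (Z.of_nat d <= cz u - cz v <= Z.of_nat k - Z.of_nat d)%Z.
  move=> u v Ha. move: (Hc u v Ha) => /andP [h1 h2]. rewrite /cz.
  have := ltn_ord (c u). have := ltn_ord (c v). lia.
have [x Hx] := @potential V adj cz (Z.of_nat k) (Z.of_nat d) Hsym Hcz ltac:(lia) HR.
exact: geometry Hsg Hx.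
Qed.
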